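(* For positive integers $n$ and $d$, the $n^d$-grid has tree-width at least $\frac{2}{9d} \cdot n^{d-1}-1$.
   Context: The $n^d$-grid is the graph with vertex set $\{0,\dots,n-1\}^d$ in which two vertices $(x_1,\dots,x_d)$ and $(x_1',\dots,x_d')$ are adjacent if and only if $|x_1-x_1'|+\dots+|x_d-x_d'|=1$. *)

(* Defs.v *)
From mathcomp Require Import all_boot all_order all_algebra.
Set Implicit Arguments. Unset Strict Implicit. Unset Printing Implicit Defensive.
Import Order.TTheory GRing.Theory Num.Theory.

Definition grid_vertex (n d : nat) := {ffun 'I_d -> 'I_n}.

Definition natdist (a b : nat) : nat := (a - b) + (b - a).

Definition grid_adj (n d : nat) : rel (grid_vertex n d) :=
  fun x y => \sum_(i < d) natdist (x i) (y i) == 1.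

Definition is_tree (T : finType) (e : rel T) : Prop :=
  [/\ 0 < #|T|, symmetric e, irreflexive e,
      (forall x y : T, connect e x y) &
      (forall c : seq T, 3 <= size c -> ~~ ucycleb e c)].

Definition rel_on (T : finType) (e : rel T) (S : {set T}) : rel T :=
  fun x y => [&& e x y, x \in S & y \in S].

Definition tree_decomposition (V : finType) (adj : rel V)
    (T : finType) (e : rel T) (bag : T -> {set V}) : Prop :=
  [/\ is_tree e,
      (forall v : V, exists t : T, v \in bag t),
      (forall u v : V, adj u v -> exists t : T, (u \in bag t) && (v \in bag t)) &
      (forall v : V, forall t1 t2 : T, v \in bag t1 -> v \in bag t2 ->
          connect (rel_on e [set t | v \in bag t]) t1 t2)].

Definition td_width (V T : finType) (bag : T -> {set V}) : rat :=
  ((\max_(t : T) #|bag t|)%N)%:R - 1.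

(* Main.v *)
Require Import Defs.
From mathcomp Require Import all_boot all_order all_algebra.
From mathcomp Require Import zify.
Import Order.TTheory GRing.Theory Num.Theory.
Set Implicit Arguments. Unset Strict Implicit. Unset Printing Implicit Defensive.

Section Tree.
Variables (T : finType) (e : rel T).
Hypothesis tr : is_tree e.

Lemma tree_no_detour t t' : e t t' ->
  connect (fun x y => e x y && ~~ ((x == t') && (y == t))) t' t -> False.
Proof.
case: tr => _ _ irr _ nocyc ett' /connectP [p pp lp].
case: (shortenP pp) lp => p' pp' up' _ lp.
have tt' : t != t'.
  by apply/eqP => E; move: ett'; rewrite E irr.
case: p' pp' up' lp => [|x [|y q]] /=.
- by move=> _ _ E; rewrite E eqxx in tt'.
- by move=> /andP [/andP [_]]; rewrite eqxx /= => /negP + _ _ E; rewrite E eqxx.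
- move=> pp' up' lp.
  have := nocyc [:: t', x, y & q] isT; move/negP; apply.
  apply/andP; split; last exact: up'.
  have sub : subrel (fun x y => e x y && ~~ ((x == t') && (y == t))) e.
    by move=> a b /andP [].
  rewrite (_ : cycle e _ = path e t' (rcons [:: x, y & q] t')) //.
  rewrite rcons_path (sub_path sub (pp' : path _ t' [:: x, y & q])) /=.
  by rewrite -lp.
Qed.

Lemma sink_exists (dir : rel T) : subrel dir e ->
  (forall x y, dir x y -> dir y x -> False) ->
  exists t, forall t', ~~ dir t t'.
Proof.
move=> sub no2.
case: (pickP (fun t => [forall t', ~~ dir t t'])) => [t /forallP H|none].
  by exists t.
have hf : forall t, dir t (odflt t [pick t' | dir t t']).
  move=> t; case: pickP => //= H; have := none t.
  by move=> /negbT /forallPn [t' /negPn]; rewrite H.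
set f := fun t => odflt t [pick t' | dir t t'].
case: tr => /card_gt0P [t0 _] _ irr _ nocyc.
have := looping_order f t0; rewrite /looping => /trajectP [i lti Ei].
set z := iter (order f t0) f t0 in Ei.
have fz : fconnect f (f z) z.
  have E : iter (order f t0 - i.+1) f (iter i.+1 f t0) = z.
    by rewrite -iterD subnK.
  have := fconnect_iter f (order f t0 - i.+1) (iter i.+1 f t0).
  by rewrite E iterS -Ei.
move: fz; rewrite fconnect_f => cyc.
have uo := orbit_uniq f z.
have dcyc : cycle e (orbit f z).
  apply: (sub_cycle _ cyc) => a b /eqP <-; apply: sub; exact: hf.
move: cyc uo dcyc; rewrite /orbit.
case Eo: (order f z) => [|[|[|k]]].
- by have := order_gt0 f z; rewrite Eo.
- by rewrite /= andbT => /eqP fzz; have := hf z; rewrite -/(f z) fzz => /sub; rewrite irr.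
- rewrite /= andbT => /andP [_ /eqP ffz] _ _.
  by exfalso; apply: (no2 z (f z)); [exact: hf | rewrite -[X in dir _ X]ffz; exact: hf].
- move=> _ uo dcyc.
  by exfalso; move: (nocyc (traject f z k.+3)); rewrite size_traject => /(_ isT); rewrite /ucycleb dcyc uo.
Qed.
End Tree.

Lemma lift_path (T : finType) (e : rel T) (S : {set T}) x q :
  path e x q -> (forall y, y \in x :: q -> y \in S) -> path (rel_on e S) x q.
Proof.
elim: q x => [|y q IH] x //= /andP [exy pq] H.
rewrite /rel_on exy !H ?inE ?eqxx ?orbT //=. apply: (IH y pq) => z zin; apply: H; by rewrite in_cons zin orbT.

Qed.

Lemma rel_on_sym (T : finType) (e : rel T) (S : {set T}) :
  symmetric e -> symmetric (rel_on e S).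
Proof. by move=> sym x y; rewrite /rel_on sym; case: (x \in S); case: (y \in S); rewrite ?andbF ?andbT. Qed.

Section Sep.
Variables (V T : finType) (adj : rel V) (e : rel T) (bag : T -> {set V}).
Hypothesis td : tree_decomposition adj e bag.

Definition compo (B : {set V}) v := [set w | connect (rel_on adj (~: B)) v w].
Definition Rs t t' := [set s | connect (rel_on e (~: [set t])) t' s].
Definition dir t t' := e t t' && [exists v, (v \notin bag t) &&
   (#|V| < 2 * #|compo (bag t) v|) && [exists s, (v \in bag s) && (s \in Rs t t')]].

Lemma prop1 t t' u s1 s2 : u \notin bag t -> u \in bag s1 -> u \in bag s2 ->
  s1 \in Rs t t' -> s2 \in Rs t t'.
Proof.
case: td => _ _ _ c4 ut u1 u2; rewrite !inE => r1.
apply: (connect_trans r1).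
apply: (connect_sub _ (c4 u s1 s2 u1 u2)) => a b /and3P [eab ha hb].
apply: connect1; rewrite /rel_on eab !inE /=.
by apply/andP; split; apply/eqP => E; move: ha hb; rewrite !inE E (negbTE ut).
Qed.

Lemma prop2 t t' v w : connect (rel_on adj (~: bag t)) v w ->
  (forall s, v \in bag s -> s \in Rs t t') -> forall s, w \in bag s -> s \in Rs t t'.
Proof.
move=> /connectP [p pp ->]; elim: p v pp => [|x p IH] v //= /andP [/and3P [avx vn xn] pp] H.
apply: (IH x pp) => s xs.
case: td => _ _ c3 _; have [s0 /andP [vs0 xs0]] := c3 _ _ avx.
apply: (prop1 (s1 := s0)) xs0 xs (H _ vs0).
by move: xn; rewrite inE.
Qed.

Lemma dir_no2 t t' : dir t t' -> dir t' t -> False.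
Proof.
move=> /andP [ett' /existsP [v /andP [/andP [vn bigv] /existsP [s1 /andP [vs1 r1]]]]].
move=> /andP [_ /existsP [v' /andP [/andP [vn' bigv'] /existsP [s1' /andP [vs1' r1']]]]].
have : 0 < #|compo (bag t) v :&: compo (bag t') v'|.
  set A := compo (bag t) v in bigv *; set B := compo (bag t') v' in bigv' *.
  have H1 := cardsUI A B.
  have H2 : #|A :|: B| <= #|V| by rewrite -cardsT; apply: subset_leq_card; apply: subsetT.
  lia.
move=> /card_gt0P [w]; rewrite inE => /andP [wc wc'].
move: wc wc'; rewrite !inE => wc wc'.
have Hv : forall s, v \in bag s -> s \in Rs t t'.
  by move=> s vs; apply: (prop1 vn vs1 vs r1).
have Hv' : forall s, v' \in bag s -> s \in Rs t' t.
  by move=> s vs; apply: (prop1 vn' vs1' vs r1').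
case: (td) => tr c2 _ _; have [s ws] := c2 w.
have := prop2 wc Hv ws; have := prop2 wc' Hv' ws; rewrite !inE => c1 c0.
apply: (tree_no_detour tr ett').
apply: (connect_trans (y := s)).
  apply: (connect_sub _ c0) => a b /and3P [eab _ hb]; apply: connect1.
  by rewrite eab /=; move: hb; rewrite !inE => /negP hb; apply/negP => /andP [_ /eqP E]; apply: hb; rewrite E.
have sym : symmetric e by case: tr.
rewrite (sym_connect_sym (rel_on_sym _ sym)) in c1.
apply: (connect_sub _ c1) => a b /and3P [eab ha _]; apply: connect1.
by rewrite eab /=; move: ha; rewrite !inE => /negP ha; apply/negP => /andP [/eqP E _]; apply: ha; rewrite E.
Qed.

Lemma separator : exists t, forall v, v \notin bag t -> 2 * #|compo (bag t) v| <= #|V|.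
Proof.
case: (td) => tr c2 _ _.
have [t nodir] := sink_exists tr (dir := dir) (fun a b (H : dir a b) => proj1 (andP H)) dir_no2.
exists t => v vn; rewrite leqNgt; apply/negP => big.
have [s vs] := c2 v.
have st : s != t by apply/eqP => E; move: vs; rewrite E (negbTE vn).
case: (tr) => _ _ _ conn _.
move: (conn t s) => /connectP [p pp lp].
case: (shortenP pp) lp => p' pp' up' _ lp.
case: p' pp' up' lp => [|t1 q] /=; first by move=> _ _ E; rewrite E eqxx in st.
move=> /andP [ett1 pq] /andP [tnin _] lp.
have := nodir t1; apply/negP/negPn.
rewrite /dir ett1 /=; apply/existsP; exists v; rewrite vn big /=.
apply/existsP; exists s; rewrite vs /= inE.
apply/connectP; exists q => //.
apply: lift_path => // y yin; rewrite !inE; apply/eqP => E; rewrite -E in tnin.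
by rewrite yin in tnin.
Qed.
End Sep.

Lemma card_bigcup_le (T I : finType) (P : pred I) (F : I -> {set T}) :
  #|\bigcup_(i | P i) F i| <= \sum_(i | P i) #|F i|.
Proof.
apply: (big_ind2 (fun (A : {set T}) (m : nat) => #|A| <= m)) => //.
- by rewrite cards0.
- move=> A1 m1 A2 m2 h1 h2; apply: leq_trans (leq_card_setU _ _) _; exact: leq_add.
Qed.

Section Grid.
Variables (n d : nat).
Hypotheses (hn : 0 < n) (hd : 0 < d).
Local Notation V := (grid_vertex n d).
Variable B : {set V}.
Local Notation R := (rel_on (@grid_adj n d) (~: B)).

Definition mix (k : nat) (v w : V) : V := [ffun i : 'I_d => if i < k then w i else v i].
Definition upd (x : V) (k : 'I_d) (m : 'I_n) : V := [ffun i => if i == k then m else x i].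
Definition line (k : 'I_d) (v w : V) : {set V} :=
  [set u : V | [forall i, (i != k) ==> (u i == mix k v w i)]].
Definition good (v w : V) := [forall k : 'I_d, [disjoint line k v w & B]].

Lemma natdist0 a : natdist a a = 0. Proof. by rewrite /natdist subnn. Qed.

Lemma adj_upd x k (a b : 'I_n) : natdist a b = 1 -> grid_adj (upd x k a) (upd x k b).
Proof.
move=> h; rewrite /grid_adj (bigD1 k) //= !ffunE eqxx h big1 //.
by move=> i /negbTE ik; rewrite !ffunE ik natdist0.
Qed.

Lemma line_conn x k a b : (forall m, upd x k m \notin B) ->
  connect R (upd x k a) (upd x k b).
Proof.
move=> hB.
pose g (m : nat) := upd x k (insubd a m).
have gv : forall m, m < n -> val (insubd a m) = m.
  by move=> m lm; rewrite insubdK.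
have step : forall m, m.+1 < n -> R (g m) (g m.+1) && R (g m.+1) (g m).
  move=> m lm; rewrite /rel_on !inE !hB /= !andbT.
  apply/andP; split; apply: adj_upd; rewrite !gv //; try lia;
  rewrite /natdist; lia.
have H : forall a j, a + j < n -> connect R (g a) (g (a + j)) && connect R (g (a + j)) (g a).
  move=> a0; elim => [|j IH] lt; first by rewrite addn0 connect0.
  have lt' : a0 + j < n by move: lt; rewrite addnS => /ltnW.
  have lt'' : (a0 + j).+1 < n by move: lt; rewrite addnS.
  have /andP [h1 h2] := IH lt'.
  have /andP [s1 s2] := step (a0 + j) lt''.
  rewrite addnS; apply/andP; split.
    by apply: (connect_trans h1); apply: connect1.
  by apply: (connect_trans _ h2); apply: connect1.
have -> : upd x k a = g a by rewrite /g valKd.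
have -> : upd x k b = g b by rewrite /g valKd.
case: (leqP a b) => ab.
  have l1 : a + (b - a) < n by rewrite subnKC.
  by have /andP [] := H a (b - a) l1; rewrite subnKC.
have l1 : b + (a - b) < n by rewrite subnKC // ltnW.
by have /andP [] := H b (a - b) l1; rewrite subnKC // ltnW.
Qed.

Lemma good_conn v w : good v w -> connect R v w.
Proof.
move=> /forallP G.
have H : forall k, k <= d -> connect R v (mix k v w).
  elim => [|k IH] lk.
    by apply: eq_connect0; apply/ffunP => i; rewrite ffunE.
  apply: (connect_trans (IH (ltnW lk))).
  pose K := Ordinal lk.
  have E1 : mix k v w = upd (mix k v w) K (v K).
    by apply/ffunP => i; rewrite !ffunE; case: eqP => // ->; rewrite ltnn.
  have E2 : mix k.+1 v w = upd (mix k v w) K (w K).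
    apply/ffunP => i; rewrite !ffunE ltnS; case: eqP => [->|/eqP ik]; first by rewrite leqnn.
    rewrite leq_eqVlt; case: eqP => // E; case/eqP: ik; exact: val_inj.
  rewrite E1 E2; apply: line_conn => m.
  have := G K; rewrite disjoint_sym => /disjointFl -> //.
  rewrite inE; apply/forallP => i; apply/implyP => iK.
  by rewrite !ffunE (negbTE iK).
have := H d (leqnn d); congr (connect _ _ _).
by apply/ffunP => i; rewrite ffunE ltn_ord.
Qed.

Lemma S_card (k : 'I_d) (b : V) : #|[set p : V * V | b \in line k p.1 p.2]| <= n ^ d.+1.
Proof.
set S := [set p : V * V | _].
pose h (p : V * V) : 'I_n * V := (p.1 k, [ffun i : 'I_d => if i < k then p.1 i else p.2 i]).
have inj : {in S &, injective h}.
  move=> [v1 w1] [v2 w2]; rewrite !inE /= => /forallP L1 /forallP L2 [Ek Eu].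
  have Eui := fun i => congr1 (fun f : V => f i) Eu; simpl in Eui.
  congr pair; apply/ffunP => i; case: (ltngtP i k) => [lt|gt|eq].
  - by have := Eui i; rewrite !ffunE lt.
  - have ik : i != k by rewrite neq_ltn gt orbT.
    have := L1 i; have := L2 i; rewrite ik /= !ffunE ltnNge (ltnW gt) /=.
    by move=> /eqP <- /eqP <-.
  - by have -> : i = k by apply: val_inj.
  - have ik : i != k by rewrite neq_ltn lt.
    have := L1 i; have := L2 i; rewrite ik /= !ffunE lt /=.
    by move=> /eqP <- /eqP <-.
  - by have := Eui i; rewrite !ffunE ltnNge (ltnW gt).
  - have -> : i = k by apply: val_inj.
    by have := Eui k; rewrite !ffunE ltnn.
rewrite -(card_in_imset inj); apply: leq_trans (max_card _) _.
by rewrite card_prod card_ffun !card_ord expnS.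
Qed.

Lemma bad_card : #|[set p : V * V | ~~ good p.1 p.2]| <= d * (#|B| * n ^ d.+1).
Proof.
apply: (@leq_trans #|\bigcup_(k : 'I_d) \bigcup_(b in B) [set p : V * V | b \in line k p.1 p.2]|).
  apply: subset_leq_card; apply/subsetP => p; rewrite inE => /forallPn [k nd].
  case: (pickP [pred b | (b \in line k p.1 p.2) && (b \in B)]) => [b /andP [h1 h2] | none].
    by apply/bigcupP; exists k => //; apply/bigcupP; exists b => //; rewrite inE.
  case/negP: nd; apply/pred0P => x; exact: none x.
apply: leq_trans (card_bigcup_le _ _) _.
apply: (@leq_trans (\sum_(k : 'I_d) (#|B| * n ^ d.+1))); last first.
  by rewrite sum_nat_const card_ord.
apply: leq_sum => k _.
apply: leq_trans (card_bigcup_le _ _) _.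
rewrite -sum_nat_const; apply: leq_sum => b _; exact: S_card.
Qed.

Lemma P_card : (forall v, v \notin B -> 2 * #|compo (@grid_adj n d) B v| <= #|V|) ->
  2 * #|[set p : V * V | (p.1 \notin B) && connect R p.1 p.2]| <= #|V| * #|V|.
Proof.
move=> hsep.
apply: (@leq_trans (2 * \sum_(v | v \notin B) #|compo (@grid_adj n d) B v|)).
  rewrite leq_pmul2l //.
  apply: leq_trans (_ : #|\bigcup_(v | v \notin B) setX [set v] (compo (@grid_adj n d) B v)| <= _).
    apply: subset_leq_card; apply/subsetP => [[v w]]; rewrite inE /= => /andP [vn c].
    by apply/bigcupP; exists v => //; rewrite inE /= inE eqxx /compo inE.
  apply: leq_trans (card_bigcup_le _ _) _.
  by apply: leq_sum => v _; rewrite cardsX cards1 mul1n.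
rewrite big_distrr /=.
apply: (@leq_trans (\sum_(v : V) #|V|)); last by rewrite sum_nat_const.
rewrite [X in _ <= X](bigID (fun v => v \notin B)) /=; apply: leq_trans (leq_addr _ _).
by apply: leq_sum => v vn; apply: hsep.
Qed.

Lemma grid_bound : (forall v, v \notin B -> 2 * #|compo (@grid_adj n d) B v| <= #|V|) ->
  n ^ d.-1 <= 2 * d * #|B|.
Proof.
move=> hsep.
have cV : #|V| = n ^ d by rewrite card_ffun !card_ord.
set G := [set p : V * V | good p.1 p.2].
have hC := cardsC G.
have eC : ~: G = [set p : V * V | ~~ good p.1 p.2] by apply/setP => p; rewrite !inE.
rewrite eC card_prod cV in hC.
have GP : #|G| <= #|[set p : V * V | (p.1 \notin B) && connect R p.1 p.2]|.
  apply: subset_leq_card; apply/subsetP => [[v w]]; rewrite !inE /= => gd.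
  rewrite good_conn // andbT.
  move: gd => /forallP /(_ (Ordinal hd)); rewrite disjoint_sym => /disjointFl -> //.
  rewrite inE; apply/forallP => i; apply/implyP => _; by rewrite !ffunE ltn0.
have hP := P_card hsep; rewrite cV in hP.
have hB := bad_card.
have key : n ^ d * n ^ d <= 2 * d * #|B| * n ^ d.+1 by lia.
have E : n ^ d * n ^ d = n ^ d.-1 * n ^ d.+1 by rewrite -!expnD; congr (_ ^ _); lia.
rewrite E leq_pmul2r ?expn_gt0 ?hn // in key.
Qed.
End Grid.
Unset Implicit Arguments.
Set Strict Implicit.
Local Open Scope ring_scope.

Theorem lemma13 (n d : nat) (hn : (0 < n)%N) (hd : (0 < d)%N)
    (T : finType) (e : rel T) (bag : T -> {set grid_vertex n d}) :
  tree_decomposition (@grid_adj n d) e bag ->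
  2%:R / (9 * d)%:R * (n ^ (d - 1))%:R - 1 <= td_width bag.
Proof.
move=> td.
have [t sep] := separator td.
have hb := grid_bound hn hd sep.
have hM : (#|bag t| <= \max_(s : T) #|bag s|)%N by apply: (leq_bigmax_cond t).
rewrite /td_width lerD2r mulrC mulrA.
rewrite ler_pdivrMr ?ltr0n ?muln_gt0 ?hd //.
rewrite -!natrM ler_nat.
rewrite subn1. apply: (leq_trans (leq_mul hb (leqnn 2))). move: hM. set M := (\max_(_ : _) _)%N. set b := #|bag t|. move=> hM. nia.
Qed.
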